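(* Let $n\in\mathbb{N}$ and let $a=(\alpha_1,\dots,\alpha_n)$, $b=(\beta_1,\dots,\beta_n)\in\mathbb{R}^n$. Let $\mathcal{V}_a$ and $\mathcal{V}_b$ denote the convex hulls of the sets of all coordinate permutations of $a$ and of $b$, respectively, i.e. $\mathcal{V}_a=\mathrm{conv}\{(\alpha_{\pi(1)},\dots,\alpha_{\pi(n)}):\pi\in S_n\}$ and similarly for $b$. Then $\mathcal{V}_a\cap\mathcal{V}_b=\emptyset$ if and only if $\sum_{k=1}^n\alpha_k\neq\sum_{k=1}^n\beta_k$.
   Context: $S_n$ denotes the symmetric group on $\{1,\dots,n\}$. *)

(* Defs.v *)
From HB Require Import structures.
From mathcomp Require Import all_boot all_order all_algebra all_fingroup.
From mathcomp Require Import reals.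
Set Implicit Arguments. Unset Strict Implicit. Unset Printing Implicit Defensive.
Import Order.TTheory GRing.Theory Num.Theory.
Local Open Scope ring_scope.

Definition perm_vec (R : realType) (n : nat) (a : 'rV[R]_n) (s : 'S_n) : 'rV[R]_n :=
  \row_(i < n) a 0 (s i).

Definition conv_hull (R : realType) (n : nat) (S : 'rV[R]_n -> Prop) : 'rV[R]_n -> Prop :=
  fun x => exists (m : nat) (v : 'I_m -> 'rV[R]_n) (l : 'I_m -> R),
    [/\ forall i, S (v i), forall i, 0 <= l i, \sum_(i < m) l i = 1
      & x = \sum_(i < m) l i *: v i].

Definition permutohedron (R : realType) (n : nat) (a : 'rV[R]_n) : 'rV[R]_n -> Prop :=
  conv_hull (fun x => exists s : 'S_n, x = perm_vec a s).

(* Main.v *)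
Require Import Defs.
From HB Require Import structures.
From mathcomp Require Import all_boot all_order all_algebra all_fingroup.
From mathcomp Require Import reals.
Import Order.TTheory GRing.Theory Num.Theory.
Set Implicit Arguments. Unset Strict Implicit. Unset Printing Implicit Defensive.
Local Open Scope ring_scope.

Lemma sum_perm_vec (R : realType) (n : nat) (a : 'rV[R]_n) (s : 'S_n) :
  \sum_(k < n) perm_vec a s 0 k = \sum_(k < n) a 0 k.
Proof.
rewrite /perm_vec.
under eq_bigr do rewrite mxE.
by rewrite (reindex_inj (@perm_inj _ s^-1)) /=; apply: eq_bigr => i _; rewrite permKV.
Qed.

Lemma sum_hull (R : realType) (n : nat) (a x : 'rV[R]_n) :
  permutohedron a x -> \sum_(k < n) x 0 k = \sum_(k < n) a 0 k.
Proof.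
move=> [m [v [l [Hv Hl Hs ->]]]].
under eq_bigr do rewrite summxE.
rewrite exchange_big /=.
transitivity (\sum_(i < m) l i * \sum_(k < n) a 0 k); last by rewrite -mulr_suml Hs mul1r.
apply: eq_bigr => i _.
have [s ->] := Hv i.
rewrite -(@sum_perm_vec _ _ a s) mulr_sumr.
by apply: eq_bigr => k _; rewrite mxE.
Qed.

Definition avg (R : realType) (n : nat) (a : 'rV[R]_n) : 'rV[R]_n :=
  \sum_(s : 'S_n) (#|{perm 'I_n}|%:R)^-1 *: perm_vec a s.

Lemma card_perm_neq0 (R : realType) n : (#|{perm 'I_n}|%:R : R) != 0.
Proof.
rewrite pnatr_eq0 -lt0n; apply/card_gt0P; by exists 1%g.
Qed.

Lemma avg_in (R : realType) (n : nat) (a : 'rV[R]_n) : permutohedron a (avg a).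
Proof.
exists #|{perm 'I_n}|, (fun i => perm_vec a (enum_val i)),
  (fun _ => (#|{perm 'I_n}|%:R)^-1).
split.
- by move=> i; exists (enum_val i).
- by move=> i; rewrite invr_ge0 ler0n.
- by rewrite sumr_const card_ord -(mulr_natr ((#|{perm 'I_n}|%:R : R)^-1)) mulVf // card_perm_neq0.
- rewrite /avg.
  have E := @big_enum_val _ 0 (@GRing.add _) _ (fun _ : 'S_n => true)
     (fun s : 'S_n => (#|{perm 'I_n}|%:R)^-1 *: perm_vec a s).
  rewrite (eq_bigl (fun s : 'S_n => s \in (fun _ : 'S_n => true))) //.
Qed.

Lemma avg_const (R : realType) (n : nat) (a : 'rV[R]_n) (j k : 'I_n) :
  avg a 0 j = avg a 0 k.
Proof.
rewrite /avg !summxE.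
under eq_bigr do rewrite !mxE.
under [RHS]eq_bigr do rewrite !mxE.
rewrite -!mulr_sumr; congr (_ * _).
rewrite (reindex_inj (@mulgI _ (tperm k j))) /=.
by apply: eq_bigr => s _; rewrite permM tpermR.
Qed.

Theorem proposition1 (R : realType) (n : nat) (a b : 'rV[R]_n) :
  (~ exists x, permutohedron a x /\ permutohedron b x) <->
  \sum_(k < n) a 0 k != \sum_(k < n) b 0 k.
Proof.
split.
- move=> H; apply/negP => /eqP Heq; apply: H.
  exists (avg a); split; first exact: avg_in.
  suff -> : avg a = avg b by exact: avg_in.
  apply/matrixP => i k; rewrite (ord1 i).
  have Hn : (n%:R : R) != 0 by rewrite pnatr_eq0 -lt0n; apply: (leq_ltn_trans (leq0n k)).
  apply: (mulfI Hn).
  have E : forall c : 'rV[R]_n, n%:R * c 0 k = \sum_(k < n) c 0 k -> True by [].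
  have key : forall c : 'rV[R]_n, \sum_(j < n) avg c 0 j = n%:R * avg c 0 k.
    move=> c; under eq_bigr do rewrite (@avg_const _ _ c _ k).
    by rewrite sumr_const card_ord mulr_natl.
  by rewrite -!key (sum_hull (avg_in a)) (sum_hull (avg_in b)) Heq.
- move=> Hne [x [Ha Hb]].
  by move: Hne; rewrite -(sum_hull Ha) -(sum_hull Hb) eqxx.
Qed.
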